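(* Let $\{g_\xi\}_{\xi\in K}$ be a family of real-valued continuous functions on the unit circle $\mathbb{T}$, and for bounded non-negative measures $d\mu_0,d\mu_1$ on $\mathbb{T}$ define $\delta(d\mu_0,d\mu_1)=\sup_{\xi\in K}\left|\int_{\mathbb{T}}g_\xi\,(d\mu_0-d\mu_1)\right|$. Then $\delta$ is a weakly continuous metric on the set $\mathfrak{M}$ of bounded non-negative measures on $\mathbb{T}$ if and only if the following two conditions hold: (a) for any two distinct measures $d\mu_0\neq d\mu_1$ in $\mathfrak{M}$ there is $\xi\in K$ with $\int_{\mathbb{T}}g_\xi d\mu_0\neq\int_{\mathbb{T}}g_\xi d\mu_1$; and (b) the family $\{g_\xi\}_{\xi\in K}$ is equicontinuous and uniformly bounded.
   Context: Weak topology on $\mathfrak{M}$: $d\mu_k\to d\mu$ iff $\int fd\mu_k\to\int fd\mu$ for every real continuous $f$ on $\mathbb{T}$; a metric $\delta$ on $\mathfrak{M}$ is weakly continuous if it is continuous on $\mathfrak{M}\times\mathfrak{M}$ for this topology. The family is equicontinuous if for every $\epsilon>0$ there is $\gamma>0$ such that $|g_\xi(\theta_1)-g_\xi(\theta_2)|<\epsilon$ whenever $|\theta_1-\theta_2|<\gamma$, for all $\theta_1,\theta_2\in\mathbb{T}$ and all $\xi\in K$. *)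

(* Defs.v *)
(* The unit circle T is modelled as R / 2piZ:
   functions on T are 2pi-periodic functions R -> R, and bounded non-negative
   (Borel) measures on T are finite measures on R concentrated on [0, 2pi). *)
From HB Require Import structures.
From mathcomp Require Import all_boot all_order all_algebra.
From mathcomp Require Import all_classical all_reals all_analysis.
Set Implicit Arguments. Unset Strict Implicit. Unset Printing Implicit Defensive.
Import Order.TTheory GRing.Theory Num.Theory.
Import numFieldNormedType.Exports.
Local Open Scope classical_set_scope.
Local Open Scope ring_scope.

Definition periodic2pi (R : realType) (f : R -> R) : Prop :=
  forall x : R, f (x + 2 * pi) = f x.

Definition on_circle (R : realType) (mu : {finite_measure set R -> \bar R}) : Prop :=
  mu (~` `[0, 2 * pi[%classic) = 0%E.

Definition cint (R : realType) (mu : {finite_measure set R -> \bar R}) (g : R -> R) : R :=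
  Rintegral mu setT g.

Definition meq (R : realType) (mu nu : {finite_measure set R -> \bar R}) : Prop :=
  forall A : set R, measurable A -> mu A = nu A.

Definition wconv (R : realType) (mu_ : nat -> {finite_measure set R -> \bar R})
    (mu : {finite_measure set R -> \bar R}) : Prop :=
  forall f : R -> R, continuous f -> periodic2pi f ->
    (fun k => cint (mu_ k) f) @ \oo --> cint mu f.

Definition delta (R : realType) (K : Type) (g : K -> R -> R)
    (mu0 mu1 : {finite_measure set R -> \bar R}) : \bar R :=
  ereal_sup [set (`| cint mu0 (g xi) - cint mu1 (g xi) |)%:E | xi in [set: K]].

Definition is_metric_on (R : realType)
    (d : {finite_measure set R -> \bar R} -> {finite_measure set R -> \bar R} -> \bar R) : Prop :=
  (forall mu nu, on_circle mu -> on_circle nu -> d mu nu \is a fin_num) /\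
  (forall mu nu, on_circle mu -> on_circle nu -> (d mu nu = 0%E <-> meq mu nu)) /\
  (forall mu nu, on_circle mu -> on_circle nu -> d mu nu = d nu mu) /\
  (forall mu nu rho, on_circle mu -> on_circle nu -> on_circle rho ->
     (d mu rho <= d mu nu + d nu rho)%E).

Definition weakly_continuous (R : realType)
    (d : {finite_measure set R -> \bar R} -> {finite_measure set R -> \bar R} -> \bar R) : Prop :=
  forall (mu_ nu_ : nat -> {finite_measure set R -> \bar R}) mu nu,
    (forall k, on_circle (mu_ k)) -> (forall k, on_circle (nu_ k)) ->
    on_circle mu -> on_circle nu ->
    wconv mu_ mu -> wconv nu_ nu ->
    (fun k => d (mu_ k) (nu_ k)) @ \oo --> d mu nu.

(* equicontinuity of the family, as in the paper (for periodic functions,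
   distance on R is equivalent to the circle distance) *)
Definition equicontinuous_family (R : realType) (K : Type) (g : K -> R -> R) : Prop :=
  forall eps : R, 0 < eps -> exists2 gam : R, 0 < gam &
    forall (xi : K) (t1 t2 : R), `|t1 - t2| < gam -> `|g xi t1 - g xi t2| < eps.

Definition unif_bounded (R : realType) (K : Type) (g : K -> R -> R) : Prop :=
  exists M : R, forall (xi : K) (t : R), `|g xi t| <= M.

(* Main.v *)
Require Import Defs.
From HB Require Import structures.
From mathcomp Require Import all_boot all_order all_algebra.
From mathcomp Require Import all_classical all_reals all_analysis.
From mathcomp Require Import measurable_realfun.
From mathcomp Require Import lra ring.
Import Order.TTheory GRing.Theory Num.Theory.
Import numFieldNormedType.Exports.
Local Open Scope classical_set_scope.
Local Open Scope ring_scope.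
Set Implicit Arguments. Unset Strict Implicit. Unset Printing Implicit Defensive.



Section Basics.
Variable R : realType.
Notation FM := {finite_measure set R -> \bar R}.

Lemma per_nat (f : R -> R) : periodic2pi f -> forall (n : nat) x,
  f (x + n%:R * (2 * pi)) = f x.
Proof.
move=> hf; elim=> [|n IH] x; first by rewrite mul0r addr0.
by rewrite -[n.+1]addn1 natrD mulrDl mul1r addrA hf IH.
Qed.

Lemma per_int (f : R -> R) : periodic2pi f -> forall (z : int) x,
  f (x + z%:~R * (2 * pi)) = f x.
Proof.
move=> hf [n|n] x; first exact: per_nat hf n x.
rewrite NegzE mulrNz mulNr.
have := per_nat hf n.+1 (x - n.+1%:R * (2 * pi)).
by rewrite subrK => ->.
Qed.

Definition kk (t : R) : int := - Num.floor (t / (2 * pi)).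
Definition pr (t : R) : R := t + (kk t)%:~R * (2 * pi).

Lemma pi2_gt0 : 0 < 2 * pi :> R.
Proof. by rewrite mulr_gt0 // pi_gt0. Qed.

Lemma pr_itv t : 0 <= pr t < 2 * pi.
Proof.
rewrite /pr /kk mulrNz mulNr.
have h2 := pi2_gt0.
have /andP[h1 h3] := floor_itv (t / (2 * pi)).
rewrite subr_ge0 ltrBlDr; apply/andP; split.
  by rewrite -ler_pdivlMr.
rewrite {1}(_ : t = t / (2 * pi) * (2 * pi)); last by rewrite divfK ?lt0r_neq0.
by rewrite -[X in _ < X + _]mul1r -mulrDl ltr_pM2r // addrC -intrD1.
Qed.

Lemma pr_per (f : R -> R) : periodic2pi f -> forall t, f (pr t) = f t.
Proof. by move=> hf t; rewrite /pr per_int. Qed.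

Lemma cmeas (f : R -> R) : continuous f -> measurable_fun setT f.
Proof. exact: continuous_measurable_fun. Qed.

Lemma bd_int (mu : FM) (f : R -> R) (M : R) : measurable_fun setT f ->
  (forall x, `|f x| <= M) -> mu.-integrable setT (EFin \o f).
Proof.
move=> mf hM; apply: (@le_integrable _ _ _ mu setT measurableT _ (EFin \o cst M)) => //.
- exact/measurable_EFinP.
- move=> x _ /=; rewrite lee_fin.
  exact: (le_trans (hM x) (ler_norm M)).
- exact: finite_measure_integrable_cst.
Qed.

Lemma cint_dirac (a : R) (f : R -> R) : measurable_fun setT f ->
  cint (\d_a) f = f a.
Proof.
move=> mf; rewrite /cint /Rintegral integral_dirac /=.
  by rewrite indicE mem_set // mul1r.
- exact: measurableT.
- exact: measurableT_comp.
Qed.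

Lemma cint_mzero (f : R -> R) : cint (@mzero _ R R) f = 0.
Proof. by rewrite /cint /Rintegral integral_measure_zero. Qed.

Lemma on_circle_dirac t : on_circle (\d_(pr t) : FM).
Proof.
rewrite /on_circle; change ((@dirac _ R (pr t) R) (~` `[0, 2 * pi[%classic) = 0%E).
rewrite diracE memNset //= => /=; apply.
by rewrite in_itv /= pr_itv.
Qed.

Lemma on_circle_mzero : on_circle (@mzero _ R R : FM).
Proof. by []. Qed.

End Basics.



Section Delta.
Variable R : realType.
Notation FM := {finite_measure set R -> \bar R}.
Variables (K : Type) (g : K -> R -> R).

Lemma delta_ge (mu nu : FM) xi :
  (`|cint mu (g xi) - cint nu (g xi)|%:E <= delta g mu nu)%E.
Proof. by apply: ereal_sup_ubound; exists xi. Qed.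

Lemma delta_le (mu nu : FM) (B : R) :
  (forall xi, `|cint mu (g xi) - cint nu (g xi)| <= B) ->
  (delta g mu nu <= B%:E)%E.
Proof. by move=> h; apply: ge_ereal_sup => _ [xi _ <-]; rewrite lee_fin. Qed.

Lemma ev_lt (u : nat -> \bar R) (x e : R) : u @ \oo --> x%:E -> 0 < e ->
  \forall n \near \oo, (u n < (x + e)%:E)%E.
Proof.
move=> /fine_cvgP [hfin hc] he.
have hd := (cvgrPdist_lt _ _).1 hc e he.
near=> n.
have fn : u n \is a fin_num by near: n; apply: hfin.
have hn : `|x - (fine \o u) n| < e by near: n; apply: hd.
rewrite -(fineK fn) lte_fin.
have := ler_norm (fine (u n) - x); rewrite distrC in hn.
by move=> h; apply: (le_lt_trans (y := x + (fine (u n) - x))); [rewrite addrC subrK|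
  rewrite ltrD2l (le_lt_trans h hn)].
Unshelve. all: by end_near.
Qed.

Lemma incr_ge (f : nat -> nat) : increasing_seq f -> forall n, (n <= f n)%N.
Proof.
move=> /increasing_seqP hf; elim=> [|n IH] //.
by apply: leq_ltn_trans IH (hf n).
Qed.

Hypothesis gcont : forall xi, continuous (g xi).
Hypothesis gper : forall xi, periodic2pi (g xi).

Lemma cint_dirac_pr xi t : cint (\d_(pr t) : FM) (g xi) = g xi t.
Proof.
by rewrite (@cint_dirac _ _ _ (cmeas (@gcont xi))) pr_per.
Qed.

Lemma wconv_dirac (s : nat -> R) l : s @ \oo --> l ->
  wconv (fun n => \d_(pr (s n)) : FM) (\d_(pr l) : FM).
Proof.
move=> hs f fc fp.
rewrite (@cint_dirac _ _ _ (cmeas fc)) pr_per //.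
have -> : (fun k => cint (\d_(pr (s k)) : FM) f) = f \o s.
  by apply: funext => k /=; rewrite (@cint_dirac _ _ _ (cmeas fc)) pr_per.
by apply: continuous_cvg => //; exact: fc.
Qed.


Lemma oi_bd : is_metric_on (delta g) -> weakly_continuous (delta g) ->
  unif_bounded g.
Proof.
move=> [hfin _] hw.
apply: contrapT => nb.
have /choice [p hp] : forall n : nat, exists q : K * R, n%:R < `|g q.1 q.2|.
  move=> n; apply: contrapT => hn; apply: nb; exists n%:R => xi t.
  rewrite leNgt; apply/negP => h; apply: hn; by exists (xi, t).
pose a n := pr (p n).2.
have ba : bounded_fun a.
  exists (2 * pi); split; first exact: num_real.
  move=> M hM n _ /=.
  have /andP[h0 h1] := pr_itv (p n).2.
  by rewrite ger0_norm // ltW // (lt_trans h1 hM).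
have [f finc /cvg_ex [l hl]] := bolzano_weierstrass ba.
have hw' := hw (fun k => \d_(pr (a (f k))) : FM) (fun _ => mzero)
   (\d_(pr l)) mzero
   (fun k => on_circle_dirac _) (fun=> on_circle_mzero _) (on_circle_dirac _)
   (on_circle_mzero _) (wconv_dirac hl) (fun f _ _ => cvg_cst _).
have /fineK hx := hfin _ _ (on_circle_dirac l) (on_circle_mzero R).
rewrite -hx in hw'.
have [N _ hN] := ev_lt (hw' _) ltr01.
set x := fine _ in hN.
pose k := maxn N (Num.trunc (x + 1)).+1.
have /hN : (N <= k)%N by rewrite leq_maxl.
apply/negP; rewrite -leNgt.
apply: le_trans (delta_ge _ _ (p (f k)).1).
rewrite cint_mzero subr0 cint_dirac_pr /a pr_per // lee_fin.
apply: ltW; apply: lt_trans (hp (f k)).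
apply: (@lt_le_trans _ _ k%:R); last by rewrite ler_nat incr_ge.
have [x1|x1] := leP 0 (x + 1); last by apply: (lt_le_trans x1).
have /andP[_ t1] := truncn_itv x1.
apply: (lt_le_trans t1); rewrite ler_nat leq_maxr //.
Qed.

Lemma oi_eq : is_metric_on (delta g) -> weakly_continuous (delta g) ->
  equicontinuous_family g.
Proof.
move=> [hfin [hz _]] hw eps he.
apply: contrapT => ne.
have /choice [p hp] : forall n : nat, exists q : K * R * R,
    `|q.1.2 - q.2| < n.+1%:R^-1 /\ eps <= `|g q.1.1 q.1.2 - g q.1.1 q.2|.
  move=> n; apply: contrapT => hn; apply: ne; exists n.+1%:R^-1.
    by rewrite invr_gt0 ltr0n.
  move=> xi t1 t2 ht; rewrite ltNge; apply/negP => h; apply: hn.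
  by exists (xi, t1, t2).
pose a n := pr (p n).1.2.
pose d n := (p n).2 - (p n).1.2.
pose b n := a n + d n.
have gb n : g (p n).1.1 (b n) = g (p n).1.1 (p n).2.
  rewrite /b /a /d /pr.
  have -> : forall x y c : R, x + c + (y - x) = y + c.
    by move=> x y c; rewrite addrAC addrCA subrr addr0 addrC.
  by rewrite per_int.
have ba : bounded_fun a.
  exists (2 * pi); split; first exact: num_real.
  move=> M hM n _ /=.
  have /andP[h0 h1] := pr_itv (p n).1.2.
  by rewrite ger0_norm // ltW // (lt_trans h1 hM).
have [f finc /cvg_ex [l hl]] := bolzano_weierstrass ba.
have hd : (d \o f) @ \oo --> 0.
  apply/cvgrPdist_lt => e e0.
  have e1 : 0 <= e^-1 by rewrite invr_ge0 ltW.
  exists (Num.trunc e^-1) => // n hn /=.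
  rewrite sub0r normrN.
  rewrite /d distrC; apply: (lt_le_trans (proj1 (hp (f n)))).
  rewrite -[e]invrK lef_pV2 ?posrE ?invr_gt0 ?ltr0n //.
  have /andP[_ t1] := truncn_itv e1.
  apply: (le_trans (ltW t1)); rewrite ler_nat ltnS.
  exact: (leq_trans hn (incr_ge finc n)).
have hbl : (b \o f) @ \oo --> l.
  rewrite -[l]addr0.
  exact: (cvgD hl hd).
have hw' := hw (fun k => \d_(pr (a (f k))) : FM)
   (fun k => \d_(pr (b (f k))) : FM) (\d_(pr l)) (\d_(pr l))
   (fun k => on_circle_dirac _) (fun k => on_circle_dirac _)
   (on_circle_dirac _) (on_circle_dirac _) (wconv_dirac hl) (wconv_dirac hbl).
have h0 : delta g \d_(pr l) \d_(pr l) = 0%:E.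
  by apply/(hz _ _ (on_circle_dirac l) (on_circle_dirac l)).
rewrite h0 in hw'.
have [N _ hN] := ev_lt hw' he.
have /hN : (N <= N)%N by [].
apply/negP; rewrite -leNgt add0r.
apply: le_trans (delta_ge _ _ (p (f N)).1.1).
rewrite !cint_dirac_pr /a pr_per // gb lee_fin.
exact: (proj2 (hp (f N))).
Qed.

Lemma K_ne : (forall mu nu : FM, on_circle mu -> on_circle nu ->
  delta g mu nu \is a fin_num) -> exists xi : K, True.
Proof.
move=> hfin; apply: contrapT => nk.
have := hfin _ _ (on_circle_mzero R) (on_circle_mzero R).
rewrite /delta (_ : [set _ | xi in [set: K]] = set0) ?ereal_sup0 //.
by apply/seteqP; split => // x [xi]; exfalso; apply: nk; exists xi.
Qed.

Lemma delta_ge0 (xi : K) (mu nu : FM) : (0 <= delta g mu nu)%E.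
Proof. by apply: le_trans (delta_ge _ _ xi); rewrite lee_fin. Qed.

Lemma oi_a : is_metric_on (delta g) ->
  (forall mu0 mu1 : FM, on_circle mu0 -> on_circle mu1 -> ~ meq mu0 mu1 ->
      exists xi : K, cint mu0 (g xi) <> cint mu1 (g xi)).
Proof.
move=> [hfin [hz _]] mu0 mu1 o0 o1 nm.
have [xi0 _] := K_ne hfin.
apply: contrapT => ne.
apply: nm; apply/(hz _ _ o0 o1).
apply/eqP; rewrite eq_le; apply/andP; split; last exact: delta_ge0 xi0 _ _.
apply: delta_le => xi.
have -> : cint mu0 (g xi) = cint mu1 (g xi).
  by apply: contrapT => h; apply: ne; exists xi.
by rewrite subrr normr0.
Qed.
End Delta.



Section Circ.
Variable R : realType.
Notation FM := {finite_measure set R -> \bar R}.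

Definition II : set R := `[0, 2 * pi[%classic.

Lemma mII : measurable II.
Proof. exact: measurable_itv. Qed.

Lemma cint_circ (mu : FM) (f : R -> R) (M e : R) : on_circle mu ->
  measurable_fun setT f -> (forall x, `|f x| <= M) ->
  (forall x, 0 <= x < 2 * pi -> `|f x| <= e) ->
  `|cint mu f| <= e * fine (mu setT).
Proof.
move=> oc mf hM he.
have e0 : 0 <= e by apply: le_trans (he 0 _); rewrite ?normr_ge0 // lexx pi2_gt0.
have ifT := bd_int mu mf hM.
have -> : cint mu f = Rintegral mu II f.
  rewrite /cint /Rintegral (negligible_integral _ _ ifT oc) //.
  - by rewrite setTD setCK.
  - exact: measurableC mII.
have ifI : mu.-integrable II (EFin \o f).
  by apply: integrableS ifT => //; exact: mII.
apply: le_trans (le_normr_Rintegral mII ifI) _.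
apply: le_trans (_ : Rintegral mu II (fun=> e) <= _).
  apply: le_Rintegral => //; first exact: mII.
  - apply: (@le_integrable _ _ _ mu II mII _ (EFin \o f)) => //.
      apply/measurable_EFinP; apply: measurableT_comp => //.
      by apply: measurable_funS mf.
    by move=> x _ /=; rewrite lee_fin normr_id.
  - exact: finite_measure_integrable_cst mII.
rewrite Rintegral_cst; last exact: mII.
rewrite ler_wpM2l // fine_le ?fin_num_measure //; first exact: mII.
by apply: le_measure; rewrite ?inE //; exact: mII.
Qed.

Lemma cint_meq (mu nu : FM) f : meq mu nu -> cint mu f = cint nu f.
Proof.
move=> h; rewrite /cint /Rintegral; congr fine.
apply: (eq_measure_integral nu) => A mA _; exact: h.
Qed.

Lemma cint_mass (mu : FM) : cint mu (fun=> 1) = fine (mu setT).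
Proof. by rewrite /cint Rintegral_cst // mul1r. Qed.

Lemma mass_ge0 (mu : FM) : 0 <= fine (mu setT).
Proof. by rewrite fine_ge0. Qed.

End Circ.

Section IfMetric.
Variable R : realType.
Notation FM := {finite_measure set R -> \bar R}.
Variables (K : Type) (g : K -> R -> R).
Hypothesis gcont : forall xi, continuous (g xi).
Hypothesis gper : forall xi, periodic2pi (g xi).
Hypothesis hA : forall mu0 mu1 : FM,
      on_circle mu0 -> on_circle mu1 -> ~ meq mu0 mu1 ->
      exists xi : K, cint mu0 (g xi) <> cint mu1 (g xi).
Variable M : R.
Hypothesis hM : forall xi t, `|g xi t| <= M.

Lemma cint_g_bd (mu : FM) xi : on_circle mu ->
  `|cint mu (g xi)| <= M * fine (mu setT).
Proof.
move=> oc; apply: (cint_circ oc (cmeas (@gcont xi)) (hM xi)) => x _.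
exact: hM.
Qed.

Lemma xi0 : exists xi : K, True.
Proof.
have [|xi _] := hA (on_circle_dirac 0) (on_circle_mzero R).
  move=> h; have := h setT measurableT.
  change ((@dirac _ R (pr 0) R) setT = (@mzero _ R R) setT -> False).
  rewrite diracE mem_set //= => /eqP; rewrite eqe oner_eq0 //.
by exists xi.
Qed.

Lemma if_metric : is_metric_on (delta g).
Proof.
have [x0 _] := xi0.
split; [|split; [|split]].
- move=> mu nu om on.
  rewrite ge0_fin_numE ?(delta_ge0 _ x0) //.
  apply: le_lt_trans (delta_le (B := M * fine (mu setT) + M * fine (nu setT)) _) _.
    move=> xi; apply: le_trans (ler_normB _ _) _.
    by rewrite lerD // cint_g_bd.
  exact: ltry.
- move=> mu nu om on; split => [h|h].
    apply: contrapT => nm; have [xi hxi] := hA om on nm; apply: hxi.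
    have := delta_ge g mu nu xi; rewrite h lee_fin normr_le0 subr_eq0.
    by move/eqP.
  apply/eqP; rewrite eq_le (delta_ge0 _ x0) andbT.
  by apply: delta_le => xi; rewrite (cint_meq _ h) subrr normr0.
- move=> mu nu _ _; apply/eqP; rewrite eq_le; apply/andP; split;
    by apply: ge_ereal_sup => _ [xi _ <-]; rewrite distrC; exact: delta_ge.
- move=> mu nu rho _ _ _; apply: ge_ereal_sup => _ [xi _ <-].
  apply: le_trans (_ : (`|cint mu (g xi) - cint nu (g xi)| +
     `|cint nu (g xi) - cint rho (g xi)|)%:E <= _)%E.
    by rewrite lee_fin; apply: ler_distD.
  by rewrite EFinD; apply: leeD; exact: delta_ge.
Qed.

End IfMetric.



Section Trig.
Variable R : realType.

Lemma cos_per : periodic2pi (@cos R).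
Proof. by move=> x; rewrite mulr_natl cosD2pi. Qed.

Lemma cos_ltW (x y : R) : 0 <= x <= pi -> 0 <= y <= pi -> x < y -> cos y < cos x.
Proof.
move=> hx hy xy; rewrite ltr_cos //; by rewrite in_itv /=.
Qed.

Lemma cos_leW (x y : R) : 0 <= x <= pi -> 0 <= y <= pi -> x <= y -> cos y <= cos x.
Proof.
move=> hx hy; rewrite le_eqVlt => /predU1P[->//|xy].
exact/ltW/cos_ltW.
Qed.

Lemma cos_small (y h : R) : -pi <= y <= pi -> 0 <= h <= pi -> cos h < cos y ->
  `|y| < h.
Proof.
move=> hy hh hc; rewrite ltNge; apply/negP => hyh.
have hy' : 0 <= `|y| <= pi.
  by rewrite normr_ge0 /= ler_norml.
move: hc; rewrite -(cos_norm y); apply/negP; rewrite -leNgt.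
exact: cos_leW.
Qed.

Lemma cos_supp (t u h : R) : 0 <= t < 2 * pi -> 0 <= u < 2 * pi ->
  0 <= h <= pi -> cos h < cos (t - u) ->
  exists z : int, `|t + z%:~R * (2 * pi) - u| < h.
Proof.
move=> /andP[t0 t1] /andP[u0 u1] hh hc.
have pi0 := pi_gt0 R.
have [x1|x1] := leP (t - u) pi.
  have [x2|x2] := leP (- pi) (t - u).
    exists 0; rewrite mul0r addr0; apply: cos_small => //; by rewrite x1 x2.
  exists 1; rewrite mul1r.
  have -> : t + 2 * pi - u = (t - u) + 2 * pi by lra.
  apply: cos_small => //; last by rewrite cos_per.
  apply/andP; split; lra.
exists (-1); rewrite mulN1r.
have -> : t + - (2 * pi) - u = (t - u) - 2 * pi by lra.
apply: cos_small => //.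
  apply/andP; split; lra.
by rewrite -[in X in _ < X]cos_per subrK.
Qed.

End Trig.

Section Part.
Variable R : realType.

Definition psi (s : R) (j : nat) (t : R) :=
  Num.max 0 (cos (t - j%:R * s) - cos (2 * s)).
Definition SS (N : nat) (s : R) (t : R) :=
  Num.max (\sum_(j < N) psi s j t) (cos s - cos (2 * s)).
Definition phi N s (j : nat) t := psi s j t / SS N s t.
Definition AA N s (G : R -> R) t := \sum_(j < N) G (j%:R * s) * phi N s j t.

Variables (N : nat) (s : R).
Hypothesis hs : 0 < s.
Hypothesis h2s : 2 * s <= pi.
Hypothesis hN : N%:R * s = 2 * pi.

Ltac lr := have := hs; have := h2s; have := pi_gt0 R; lra.

Local Notation cc := (cos s - cos (2 * s)).

Lemma cc_gt0 : 0 < cc.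
Proof.
have pi0 := pi_gt0 R.
rewrite subr_gt0; apply: cos_ltW; try (apply/andP; split); lr.
Qed.

Lemma psi_ge0 j t : 0 <= psi s j t.
Proof. by rewrite /psi le_max lexx. Qed.

Lemma SS_ge_cc t : cc <= SS N s t.
Proof. by rewrite /SS le_max lexx orbT. Qed.

Lemma SS_gt0 t : 0 < SS N s t.
Proof. exact: lt_le_trans cc_gt0 (SS_ge_cc t). Qed.

Lemma sum_ge_term (j : 'I_N) t : psi s j t <= \sum_(i < N) psi s i t.
Proof.
rewrite (bigD1 j) //= lerDl; apply: sumr_ge0 => i _; exact: psi_ge0.
Qed.

Lemma SS_ge_psi (j : 'I_N) t : psi s j t <= SS N s t.
Proof. by rewrite /SS le_max sum_ge_term. Qed.

Lemma phi_ge0 j t : 0 <= phi N s j t.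
Proof. by rewrite /phi divr_ge0 ?psi_ge0 // ltW // SS_gt0. Qed.

Lemma phi_le1 (j : 'I_N) t : phi N s j t <= 1.
Proof. by rewrite /phi ler_pdivrMr ?SS_gt0 // mul1r SS_ge_psi. Qed.

Lemma cover t : 0 <= t < 2 * pi -> exists j : 'I_N, cc <= psi s j t.
Proof.
move=> /andP[t0 t1].
have ts0 : 0 <= t / s by rewrite divr_ge0 // ltW.
have /andP[j0 j1] := truncn_itv ts0.
move: j0 j1; move: (Num.trunc (t / s)) => j j0 j1.
have jN : (j < N)%N.
  rewrite -(ltr_nat R); apply: le_lt_trans j0 _.
  by rewrite ltr_pdivrMr // hN.
exists (Ordinal jN) => /=.
rewrite /psi le_max; apply/orP; right.
move: j0 j1; rewrite ler_pdivlMr // ltr_pdivrMr // -addn1 natrD mulrDl mul1r => j0 j1.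
rewrite lerD2r; apply: cos_leW; try (apply/andP; split); lr.
Qed.

Lemma SS_eq t : 0 <= t < 2 * pi -> SS N s t = \sum_(j < N) psi s j t.
Proof.
move=> ht; have [j hj] := cover ht.
rewrite /SS; apply/max_idPl.
exact: le_trans hj (sum_ge_term j t).
Qed.

Lemma sum_phi t : 0 <= t < 2 * pi -> \sum_(j < N) phi N s j t = 1.
Proof.
move=> ht; rewrite /phi -mulr_suml -SS_eq // divff //.
exact: lt0r_neq0 (SS_gt0 t).
Qed.

End Part.

Section Part2.
Variable R : realType.

Lemma psi_cont (s : R) j : continuous (psi s j).
Proof.
move=> t.
have -> : psi s j = (fun=> 0) \max (fun t => cos (t - j%:R * s) - cos (2 * s)).
  by [].
apply: continuous_max; first exact: cst_continuous.
apply: continuousB; last exact: cst_continuous.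
apply: continuous_comp; last exact: continuous_cos.
apply: continuousB; first exact: cvg_id.
exact: cst_continuous.
Qed.

Lemma sumpsi_cont (s : R) n : continuous (fun t => \sum_(j < n) psi s j t).
Proof.
elim: n => [|n IH].
  have -> : (fun t : R => \sum_(j < 0) psi s j t) = fun=> 0.
    by apply: funext => t; rewrite big_ord0.
  exact: cst_continuous.
have -> : (fun t : R => \sum_(j < n.+1) psi s j t) =
    (fun t => \sum_(j < n) psi s j t) + psi s n.
  by apply: funext => t; rewrite big_ord_recr.
move=> t; apply: continuousD; [exact: IH | exact: psi_cont].
Qed.

Lemma SS_cont N (s : R) : continuous (SS N s).
Proof.
move=> t.
have -> : SS N s = (fun t => \sum_(j < N) psi s j t) \max
    (fun=> cos s - cos (2 * s)) by [].
apply: continuous_max; [exact: sumpsi_cont | exact: cst_continuous].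
Qed.

Lemma phi_cont N (s : R) j : 0 < s -> 2 * s <= pi -> continuous (phi N s j).
Proof.
move=> hs h2s t.
have -> : phi N s j = psi s j \* (fun t => (SS N s t)^-1) by [].
apply: continuousM; first exact: psi_cont.
apply: continuousV; first exact: lt0r_neq0 (SS_gt0 N hs h2s t).
exact: SS_cont.
Qed.

Lemma psi_per (s : R) j : periodic2pi (psi s j).
Proof.
move=> t; rewrite /psi.
by rewrite (_ : t + 2 * pi - j%:R * s = (t - j%:R * s) + 2 * pi) ?cos_per //;
  rewrite addrAC.
Qed.

Lemma SS_per N (s : R) : periodic2pi (SS N s).
Proof.
move=> t; rewrite /SS; congr (Num.max _ _).
by apply: eq_bigr => j _; rewrite psi_per.
Qed.

Lemma phi_per N (s : R) j : periodic2pi (phi N s j).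
Proof. by move=> t; rewrite /phi psi_per SS_per. Qed.

End Part2.

Section Approx.
Variable R : realType.
Variables (K : Type) (g : K -> R -> R).
Hypothesis gper : forall xi, periodic2pi (g xi).
Variables (e1 gam : R).
Hypothesis hgam : forall xi t1 t2, `|t1 - t2| < gam -> `|g xi t1 - g xi t2| < e1.
Variables (N : nat) (s : R).
Hypothesis hs : 0 < s.
Hypothesis h2s : 2 * s <= pi.
Hypothesis hN : N%:R * s = 2 * pi.
Hypothesis h2g : 2 * s <= gam.

Lemma psi_close (j : 'I_N) xi t : 0 <= t < 2 * pi -> 0 < psi s j t ->
  `|g xi t - g xi (j%:R * s)| < e1.
Proof.
move=> ht; rewrite /psi lt_max ltxx /= subr_gt0 => hc.
have pi0 := pi_gt0 R.
have hj : 0 <= j%:R * s < 2 * pi.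
  rewrite mulr_ge0 ?ler0n ?ltW //= -hN ltr_pM2r // ltr_nat; exact: ltn_ord.
have h2 : 0 <= 2 * s <= pi.
  have := hs; have := h2s; move=> a b; apply/andP; split; lra.
have [z hz] := cos_supp ht hj h2 hc.
rewrite -(per_int (@gper xi) z t); apply: hgam.
exact: lt_le_trans hz h2g.
Qed.

Lemma g_approx xi t : 0 <= t < 2 * pi ->
  `|g xi t - AA N s (g xi) t| <= e1.
Proof.
move=> ht.
have e0 : 0 <= e1.
  have hg0 : 0 < gam by apply: lt_le_trans h2g; rewrite mulr_gt0.
  by have := @hgam xi t t; rewrite !subrr normr0 => /(_ hg0) /ltW.
have -> : g xi t - AA N s (g xi) t =
    \sum_(j < N) (g xi t - g xi (j%:R * s)) * phi N s j t.
  rewrite /AA -[g xi t in LHS]mulr1 -(sum_phi hs h2s hN ht) mulr_sumr -sumrB.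
  by apply: eq_bigr => j _; rewrite mulrBl.
apply: le_trans (ler_norm_sum _ _ _) _.
apply: le_trans (_ : \sum_(j < N) e1 * phi N s j t <= _).
  apply: ler_sum => j _; rewrite normrM (ger0_norm (phi_ge0 _ hs h2s _ _)).
  have [p0|p0] := leP (psi s j t) 0.
    rewrite /phi.
    have -> : psi s j t = 0 by apply/le_anti; rewrite p0 psi_ge0.
    by rewrite mul0r !mulr0.
  rewrite ler_pM2r; first exact/ltW/psi_close.
  by rewrite /phi divr_gt0 // SS_gt0.
by rewrite -mulr_sumr sum_phi // mulr1.
Qed.

End Approx.



Section Integ.
Variable R : realType.
Notation FM := {finite_measure set R -> \bar R}.

Lemma cint_sub (mu : FM) (f h : R -> R) (Mf Mh : R) :
  measurable_fun setT f -> measurable_fun setT h ->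
  (forall x, `|f x| <= Mf) -> (forall x, `|h x| <= Mh) ->
  cint mu (fun t => f t - h t) = cint mu f - cint mu h.
Proof.
move=> mf mh bf bh; rewrite /cint RintegralB //.
- exact: bd_int mf bf.
- exact: bd_int mh bh.
Qed.

Lemma cint_scale (mu : FM) (c : R) (f : R -> R) (Mf : R) :
  measurable_fun setT f -> (forall x, `|f x| <= Mf) ->
  cint mu (fun t => c * f t) = c * cint mu f.
Proof.
by move=> mf bf; rewrite /cint RintegralZl //; exact: bd_int mf bf.
Qed.

Lemma cint_sumN (mu : FM) n (F : 'I_n -> R -> R) (B : 'I_n -> R) :
  (forall j, measurable_fun setT (F j)) -> (forall j x, `|F j x| <= B j) ->
  cint mu (fun t => \sum_(j < n) F j t) = \sum_(j < n) cint mu (F j).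
Proof.
move=> mF bF; rewrite /cint /Rintegral.
under eq_integral do rewrite -sumEFin.
rewrite integral_sum //; last by move=> j; exact: bd_int (mF j) (bF j).
rewrite -sum_fine // => j _.
exact: integrable_fin_num (bd_int _ (mF j) (bF j)).
Qed.

End Integ.

Section UCpre.
Variable R : realType.
Notation FM := {finite_measure set R -> \bar R}.
Variables (K : Type) (g : K -> R -> R).
Hypothesis gcont : forall xi, continuous (g xi).
Variable M : R.
Hypothesis hM : forall xi t, `|g xi t| <= M.
Variables (N : nat) (s : R).
Hypothesis hs : 0 < s.
Hypothesis h2s : 2 * s <= pi.

Lemma phi_meas j : measurable_fun setT (phi N s j).
Proof. by apply: cmeas; apply: phi_cont. Qed.

Lemma phi_bd (j : 'I_N) x : `|phi N s j x| <= 1.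
Proof. by rewrite ger0_norm ?phi_ge0 ?phi_le1. Qed.

Lemma term_meas (c : R) j : measurable_fun setT (fun t => c * phi N s j t).
Proof.
apply: cmeas => t.
have -> : (fun t => c * phi N s j t) = (fun=> c) \* phi N s j by [].
apply: continuousM; [exact: cst_continuous | exact: phi_cont].
Qed.

Lemma term_bd (c : R) (j : 'I_N) x : `|c * phi N s j x| <= `|c|.
Proof.
rewrite normrM -[X in _ <= X]mulr1; apply: ler_wpM2l => //; exact: phi_bd.
Qed.

Definition BA xi := \sum_(j < N) `|g xi (j%:R * s)|.

Lemma AA_bd xi x : `|AA N s (g xi) x| <= BA xi.
Proof.
rewrite /AA; apply: le_trans (ler_norm_sum _ _ _) _.
by apply: ler_sum => j _; exact: term_bd.
Qed.

Lemma AA_meas xi : measurable_fun setT (AA N s (g xi)).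
Proof.
rewrite /AA.
apply: (@measurable_sum _ _ _ setT _ (index_enum 'I_N)
  (fun (j : 'I_N) t => g xi (j%:R * s) * phi N s j t)).
by move=> j; exact: term_meas.
Qed.

Lemma cint_AA (mu : FM) xi :
  cint mu (AA N s (g xi)) = \sum_(j < N) g xi (j%:R * s) * cint mu (phi N s j).
Proof.
rewrite /AA (@cint_sumN _ mu N (fun j t => g xi (j%:R * s) * phi N s j t)
   (fun j => `|g xi (j%:R * s)|)).
- apply: eq_bigr => j _; rewrite (@cint_scale _ mu _ _ 1) //.
    exact: phi_meas.
  exact: phi_bd.
- by move=> j; exact: term_meas.
- by move=> j x; exact: term_bd.
Qed.

Lemma decomp (mu : FM) xi : cint mu (g xi) =
  cint mu (fun t => g xi t - AA N s (g xi) t) +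
  \sum_(j < N) g xi (j%:R * s) * cint mu (phi N s j).
Proof.
rewrite (@cint_sub _ mu _ _ M (BA xi)) ?cint_AA ?subrK //.
- exact: cmeas (@gcont xi).
- exact: AA_meas.
- by move=> x; exact: AA_bd.
Qed.

End UCpre.

Section UC.
Variable R : realType.
Notation FM := {finite_measure set R -> \bar R}.
Variables (K : Type) (g : K -> R -> R).
Hypothesis gcont : forall xi, continuous (g xi).
Hypothesis gper : forall xi, periodic2pi (g xi).
Variable M : R.
Hypothesis hM : forall xi t, `|g xi t| <= M.
Hypothesis hE : equicontinuous_family g.

Lemma Dbd (e1 gam : R) (N : nat) (s : R)
  (hgam : forall xi t1 t2, `|t1 - t2| < gam -> `|g xi t1 - g xi t2| < e1)
  (hs : 0 < s) (h2s : 2 * s <= pi) (hN : N%:R * s = 2 * pi) (h2g : 2 * s <= gam)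
  (nu : FM) xi : on_circle nu ->
  `|cint nu (fun t => g xi t - AA N s (g xi) t)| <= e1 * fine (nu setT).
Proof.
move=> oc; apply: (@cint_circ _ nu _ (M + BA g N s xi)) => //.
- apply: measurable_funB; first exact: cmeas (@gcont xi).
  exact: AA_meas.
- move=> x; apply: le_trans (ler_normB _ _) _.
  by apply: lerD; [exact: hM | exact: AA_bd].
- move=> x hx; exact: (g_approx gper hgam hs h2s hN h2g xi hx).
Qed.

Lemma UC (mu_ : nat -> FM) (mu : FM) : (forall k, on_circle (mu_ k)) ->
  on_circle mu -> wconv mu_ mu ->
  forall e, 0 < e -> \forall k \near \oo, forall xi,
    `|cint (mu_ k) (g xi) - cint mu (g xi)| <= e.
Proof.
move=> ock oc hw e e0.
have m0 : 0 <= fine (mu setT) := mass_ge0 mu.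
have hmass : (fun k => fine (mu_ k setT)) @ \oo --> fine (mu setT).
  have := hw (fun=> 1) (@cst_continuous R R (1 : R)) (fun _ => erefl).
  rewrite cint_mass.
  have -> : (fun k => cint (mu_ k) (fun=> 1)) = (fun k => fine (mu_ k setT)).
    by apply: funext => k; rewrite cint_mass.
  by [].
have d10 : 0 < 2 * (2 * fine (mu setT) + 1) by lra.
have [e1 e10 E1] : exists2 e1 : R, 0 < e1 &
    e1 * (2 * (2 * fine (mu setT) + 1)) = e.
  exists (e / (2 * (2 * fine (mu setT) + 1))); first by rewrite divr_gt0.
  by rewrite divfK ?lt0r_neq0.
have [gam g0 hgam] := hE e10.
have pi0 := pi_gt0 R.
have [r r0 [rg rp]] : exists2 r : R, 0 < r & r <= gam /\ r <= pi.
  exists (Num.min gam pi); first by rewrite lt_min g0 pi0.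
  by rewrite !ge_min !lexx ?orbT.
have q0 : 0 <= 4 * pi / r by rewrite divr_ge0 // ltW // mulr_gt0.
have /andP[_ tq] := truncn_itv q0.
move: tq; move: (Num.trunc (4 * pi / r)).+1 => N tq.
have N0 : 0 < N%:R :> R by apply: le_lt_trans tq.
move: tq; rewrite ltr_pdivrMr // => tq.
have [s hN hs] : exists2 s : R, N%:R * s = 2 * pi & 0 < s.
  exists (2 * pi / N%:R); first by rewrite mulrC divfK // lt0r_neq0.
  by rewrite divr_gt0 // mulr_gt0.
have h2r : 2 * s < r.
  rewrite -(ltr_pM2r N0).
  have -> : 2 * s * N%:R = 4 * pi by rewrite -mulrA (mulrC s) hN; lra.
  rewrite mulrC; lra.
have h2s : 2 * s <= pi by rewrite (le_trans (ltW h2r)).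
have h2g : 2 * s <= gam by rewrite (le_trans (ltW h2r)).
have d20 : 0 < 2 * (N%:R * `|M| + 1).
  by rewrite mulr_gt0 // ltr_pwDr // mulr_ge0 // ltW.
have [e2 e20 E2] : exists2 e2 : R, 0 < e2 & e2 * (2 * (N%:R * `|M| + 1)) = e.
  exists (e / (2 * (N%:R * `|M| + 1))); first by rewrite divr_gt0.
  by rewrite divfK ?lt0r_neq0.
have ev1 : \forall k \near \oo, fine (mu_ k setT) <= fine (mu setT) + 1.
  have hd := (cvgrPdist_le _ _).1 hmass 1 ltr01.
  near=> k.
  have hk : `|fine (mu setT) - fine (mu_ k setT)| <= 1 by near: k; apply: hd.
  have := ler_norm (fine (mu_ k setT) - fine (mu setT)).
  rewrite distrC in hk; lra.
have ev2 : \forall k \near \oo, forall j : 'I_N,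
    `|cint mu (phi N s j) - cint (mu_ k) (phi N s j)| <= e2.
  apply: filter_forall => j.
  have := hw (phi N s j) (@phi_cont R N s j hs h2s) (@phi_per R N s j).
  by move/cvgrPdist_le => /(_ e2 e20).
near=> k => xi.
have hk1 : fine (mu_ k setT) <= fine (mu setT) + 1 by near: k; apply: ev1.
have hk2 : forall j : 'I_N,
    `|cint mu (phi N s j) - cint (mu_ k) (phi N s j)| <= e2.
  by near: k; apply: ev2.
have hD1 := @Dbd e1 gam N s hgam hs h2s hN h2g (mu_ k) xi (ock k).
have hD2 := @Dbd e1 gam N s hgam hs h2s hN h2g mu xi oc.
rewrite (@decomp R K g gcont M hM N s hs h2s (mu_ k) xi) (@decomp R K g gcont M hM N s hs h2s mu xi).
move: hD1 hD2.
move: (cint (mu_ k) (fun t => g xi t - AA N s (g xi) t)) => D1.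
move: (cint mu (fun t => g xi t - AA N s (g xi) t)) => D2 hD1 hD2.
have hS : `|\sum_(j < N) g xi (j%:R * s) * cint (mu_ k) (phi N s j) -
    \sum_(j < N) g xi (j%:R * s) * cint mu (phi N s j)| <=
    N%:R * (`|M| * e2).
  rewrite -sumrB; apply: le_trans (ler_norm_sum _ _ _) _.
  apply: le_trans (_ : \sum_(j < N) `|M| * e2 <= _); last first.
    by rewrite sumr_const card_ord mulr_natl.
  apply: ler_sum => j _; rewrite -mulrBr normrM; apply: ler_pM => //.
    exact: le_trans (hM xi _) (ler_norm M).
  by rewrite distrC.
move: hS.
move: (\sum_(j < N) g xi (j%:R * s) * cint (mu_ k) (phi N s j)) => S1.
move: (\sum_(j < N) g xi (j%:R * s) * cint mu (phi N s j)) => S2 hS.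
have hm1 : e1 * fine (mu_ k setT) <= e1 * (fine (mu setT) + 1).
  by rewrite ler_wpM2l // ltW.
have hMe : N%:R * (`|M| * e2) <= e / 2.
  have : 0 <= e2 by rewrite ltW.
  lra.
have t1 := ler_normD (D1 - D2) (S1 - S2).
have t2 := ler_normB D1 D2.
have -> : D1 + S1 - (D2 + S2) = (D1 - D2) + (S1 - S2) by ring.
lra.
Unshelve. all: by end_near.
Qed.


End UC.



Lemma tri4 (R : realType) (x y x1 y1 : R) :
  `|x1 - y1| <= `|x - y| + `|x1 - x| + `|y1 - y|.
Proof.
have h1 := ler_normD (x - y) ((x1 - x) - (y1 - y)).
have h2 := ler_normB (x1 - x) (y1 - y).
have -> : x1 - y1 = (x - y) + ((x1 - x) - (y1 - y)) by ring.
lra.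
Qed.

Section IfWC.
Variable R : realType.
Notation FM := {finite_measure set R -> \bar R}.
Variables (K : Type) (g : K -> R -> R).
Hypothesis gcont : forall xi, continuous (g xi).
Hypothesis gper : forall xi, periodic2pi (g xi).
Hypothesis hA : forall mu0 mu1 : FM,
      on_circle mu0 -> on_circle mu1 -> ~ meq mu0 mu1 ->
      exists xi : K, cint mu0 (g xi) <> cint mu1 (g xi).
Variable M : R.
Hypothesis hM : forall xi t, `|g xi t| <= M.
Hypothesis hE : equicontinuous_family g.

Lemma if_wc : weakly_continuous (delta g).
Proof.
move=> mu_ nu_ mu nu omk onk om on hmu hnu.
have [fin _] := if_metric gcont hA hM.
have fa := fin _ _ om on.
rewrite -(fineK fa).
apply/fine_cvgP; split.
  by apply: nearW => k; exact: fin (omk k) (onk k).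
apply/cvgrPdist_le => e e0.
have e20 : 0 < e / 2 by rewrite divr_gt0.
have u1 := UC gcont gper hM hE omk om hmu e20.
have u2 := UC gcont gper hM hE onk on hnu e20.
near=> k.
have h1 : forall xi, `|cint (mu_ k) (g xi) - cint mu (g xi)| <= e / 2.
  by near: k; apply: u1.
have h2 : forall xi, `|cint (nu_ k) (g xi) - cint nu (g xi)| <= e / 2.
  by near: k; apply: u2.
have fk := fin _ _ (omk k) (onk k).
have ha : (delta g (mu_ k) (nu_ k) <= (fine (delta g mu nu) + e)%:E)%E.
  apply: delta_le => xi.
  have := delta_ge g mu nu xi; rewrite -(fineK fa) lee_fin => hd.
  have := tri4 (cint mu (g xi)) (cint nu (g xi)) (cint (mu_ k) (g xi))
    (cint (nu_ k) (g xi)).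
  have := h1 xi; have := h2 xi; lra.
have hb : (delta g mu nu <= (fine (delta g (mu_ k) (nu_ k)) + e)%:E)%E.
  apply: delta_le => xi.
  have := delta_ge g (mu_ k) (nu_ k) xi; rewrite -(fineK fk) lee_fin => hd.
  have := tri4 (cint (mu_ k) (g xi)) (cint (nu_ k) (g xi)) (cint mu (g xi))
    (cint nu (g xi)).
  have := h1 xi; have := h2 xi; rewrite !(distrC (cint mu _)) !(distrC (cint nu _)).
  lra.
move: ha; rewrite -{1}(fineK fk) lee_fin => ha.
move: hb; rewrite -{1}(fineK fa) lee_fin => hb.
rewrite /= ler_norml; apply/andP; split; lra.
Unshelve. all: by end_near.
Qed.

End IfWC.

Theorem proposition4 (R : realType) (K : Type) (g : K -> R -> R)
  (gcont : forall xi, continuous (g xi)) (gper : forall xi, periodic2pi (g xi)) :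
  (is_metric_on (delta g) /\ weakly_continuous (delta g)) <->
  ((forall mu0 mu1 : {finite_measure set R -> \bar R},
      on_circle mu0 -> on_circle mu1 -> ~ meq mu0 mu1 ->
      exists xi : K, cint mu0 (g xi) <> cint mu1 (g xi)) /\
   (equicontinuous_family g /\ unif_bounded g)).
Proof.
split.
- move=> [met wc]; split; first exact: oi_a met.
  split; [exact: oi_eq gcont gper met wc | exact: oi_bd gcont gper met wc].
- move=> [hA [hE [M hM]]]; split; first exact (if_metric gcont hA hM).
  exact (if_wc gcont gper hA hM hE).
Qed.
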